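(* Let $\varepsilon<\frac1{4\sqrt2}$ and let $|\nu\rangle=\frac1{\sqrt2}\big(|0^n\rangle|\psi_0\rangle+|1^n\rangle|\psi_1\rangle\big)$ be an $n$-nekomata state, where $|\psi_0\rangle,|\psi_1\rangle$ are arbitrary states on the same number of qubits. Then $\deg_\varepsilon(|\nu\rangle\langle\nu|)\ge n$. In particular, for the cat state $|\mathrm{Cat}_n\rangle=\frac1{\sqrt2}(|0^n\rangle+|1^n\rangle)$, $\deg_\varepsilon(|\mathrm{Cat}_n\rangle\langle\mathrm{Cat}_n|)\ge n$.
   Context: Pauli degree: with $P_\sigma=\bigotimes_iP_{\sigma_i}$, $P_0=I,P_1=X,P_2=Y,P_3=Z$, every $2^m\times2^m$ matrix is $A=\sum_\sigma\hat A(\sigma)P_\sigma$, $\deg(A)=\max\{|\{i:\sigma_i\ne0\}|:\hat A(\sigma)\ne0\}$, and $\deg_\varepsilon(A)=\min\{\deg(B):\|A-B\|\le\varepsilon\}$ with $\|\cdot\|$ the spectral norm. *)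

(* Defs.v *)
From HB Require Import structures.
From mathcomp Require Import all_boot all_order all_algebra.
From mathcomp Require Import reals.
From mathcomp Require Import complex.
Set Implicit Arguments.
Unset Strict Implicit.
Unset Printing Implicit Defensive.
Import Order.TTheory GRing.Theory Num.Theory.
Local Open Scope ring_scope.

Section Pauli.
Variable R : realType.
Local Notation C := (R[i]).

(* Single-qubit Pauli matrices P_0 = I, P_1 = X, P_2 = Y, P_3 = Z,
   given entrywise: pauli1 s a b = <a| P_s |b>, with bits a b : bool. *)
Definition pauli1 (s : 'I_4) (a b : bool) : C :=
  match nat_of_ord s with
  | 0%N => (a == b)%:R
  | 1%N => (a != b)%:R
  | 2%N => if a == b then 0 else if a then 'i%C else - 'i%C
  | _ => if a == b then (if a then -1 else 1) else 0
  end.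

(* Convention: for a k-qubit system the computational basis index i < 2^k
   has the bit of qubit t equal to odd (i %/ 2^t). *)
Definition qbit (i t : nat) : bool := odd (i %/ 2 ^ t).

(* P_sigma = tensor_t P_{sigma_t} *)
Definition pauli_mx (k : nat) (sigma : {ffun 'I_k -> 'I_4}) : 'M[C]_(2 ^ k) :=
  \matrix_(i, j) \prod_(t < k) pauli1 (sigma t) (qbit i t) (qbit j t).

Definition pauli_weight (k : nat) (sigma : {ffun 'I_k -> 'I_4}) : nat :=
  #|[set t | nat_of_ord (sigma t) != 0%N]|.

(* deg(A) <= d : A = sum_sigma c(sigma) P_sigma with all coefficients of
   Pauli strings of weight > d equal to zero (the expansion is unique). *)
Definition pauli_deg_le (k : nat) (A : 'M[C]_(2 ^ k)) (d : nat) : Prop :=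
  exists c : {ffun 'I_k -> 'I_4} -> C,
    (forall sigma, (d < pauli_weight sigma)%N -> c sigma = 0) /\
    A = \sum_sigma c sigma *: pauli_mx sigma.

Definition vnorm (N : nat) (v : 'cV[C]_N) : C :=
  sqrtC (\sum_i `|v i 0| ^+ 2).

Definition spec_norm_le (N : nat) (A : 'M[C]_N) (eps : R) : Prop :=
  forall v : 'cV[C]_N, vnorm (A *m v) <= (eps%:C)%C * vnorm v.

Definition approx_deg_ge (k : nat) (A : 'M[C]_(2 ^ k)) (eps : R) (n : nat)
  : Prop :=
  forall B : 'M[C]_(2 ^ k), spec_norm_le (A - B) eps ->
    forall d, pauli_deg_le B d -> (n <= d)%N.

Definition is_state (N : nat) (v : 'cV[C]_N) : Prop := \sum_i `|v i 0| ^+ 2 = 1.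

Definition proj (N : nat) (v : 'cV[C]_N) : 'M[C]_N := v *m (map_mx Num.conj v)^T.

(* entry of a vector at a natural-number index (0 out of range) *)
Definition vat (N : nat) (v : 'cV[C]_N) (k : nat) : C :=
  if insub k is Some i then v i 0 else 0.

(* n-nekomata state (|0^n>|psi0> + |1^n>|psi1>)/sqrt 2 on n + m qubits:
   qubits 0..n-1 form the cat register, qubits n..n+m-1 hold psi. *)
Definition nekomata (n m : nat) (psi0 psi1 : 'cV[C]_(2 ^ m)) : 'cV[C]_(2 ^ (n + m)) :=
  \col_i (((Num.sqrt (2 : R))^-1)%:C%C *
     (((i %% 2 ^ n)%N == 0%N)%:R * vat psi0 (i %/ 2 ^ n)
      + ((i %% 2 ^ n)%N == (2 ^ n).-1)%:R * vat psi1 (i %/ 2 ^ n))).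

Definition cat_state (n : nat) : 'cV[C]_(2 ^ n) :=
  \col_i (((Num.sqrt (2 : R))^-1)%:C%C *
     (((i : nat) == 0%N)%:R + ((i : nat) == (2 ^ n).-1)%:R)).

End Pauli.

(* Main.v *)
Require Import Defs.
From mathcomp Require Import all_boot all_order all_algebra.
From mathcomp Require Import reals complex zify ring lra.
Import Order.TTheory GRing.Theory Num.Theory.
Local Open Scope ring_scope.

Lemma odd_block (n t j : nat) : (t < n)%N ->
  odd (j %/ 2 ^ t) = odd ((j %% 2 ^ n) %/ 2 ^ t).
Proof.
move=> tn.
rewrite {1}(divn_eq j (2 ^ n)).
have -> : (2 ^ n = 2 ^ (n - t) * 2 ^ t)%N by rewrite -expnD subnK // ltnW.
rewrite mulnA divnMDl ?expn_gt0 // oddD oddM oddX.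
by rewrite subn_eq0 leqNgt tn /= andbF.
Qed.

Lemma qbit_lo (n t i : nat) : (t < n)%N -> (i %% 2 ^ n = 0)%N -> qbit i t = false.
Proof. by move=> tn hi; rewrite /qbit (odd_block _ _ _ tn) hi div0n. Qed.

Lemma qbit_hi (n t j : nat) : (t < n)%N -> (j %% 2 ^ n = (2 ^ n).-1)%N -> qbit j t = true.
Proof.
move=> tn hj; rewrite /qbit (odd_block _ _ _ tn) hj.
have ha : (0 < 2 ^ (n - t))%N by rewrite expn_gt0.
have hb : (0 < 2 ^ t)%N by rewrite expn_gt0.
have -> : (2 ^ n).-1 = ((2 ^ (n - t)).-1 * 2 ^ t + (2 ^ t).-1)%N.
  rewrite -[in LHS](subnK (ltnW tn)) expnD.
  move: ha hb; set a := (2 ^ (n - t))%N; set b := (2 ^ t)%N => ha hb; nia.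
rewrite divnMDl // divn_small ?prednK // addn0.
have : (0 < n - t)%N by rewrite subn_gt0.
case: (n - t)%N => // s _.
by rewrite expnS -subn1 oddB ?muln_gt0 ?expn_gt0 // oddM.
Qed.

Lemma block0 {R : realType} {k n d} {B : 'M[R[i]]_(2 ^ k)} :
  (d < n)%N -> (n <= k)%N -> pauli_deg_le B d ->
  forall i j : 'I_(2 ^ k), (i %% 2 ^ n = 0)%N -> (j %% 2 ^ n = (2 ^ n).-1)%N ->
  B i j = 0.
Proof.
move=> dn nk [c [hc ->]] i j hi hj.
rewrite summxE big1 // => sigma _.
rewrite mxE.
case: (ltnP d (pauli_weight sigma)) => [/hc -> | hw]; first by rewrite mul0r.
have [t ht0 tn] : exists2 t : 'I_k, nat_of_ord (sigma t) == 0%N & (t < n)%N.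
  apply/exists_inP; rewrite -[X in is_true X]negbK; apply/negP => /exists_inPn hall.
  have hsub : (widen_ord nk @: [set: 'I_n]) \subset [set t | nat_of_ord (sigma t) != 0%N].
    apply/subsetP => x /imsetP [y _ ->]; rewrite inE.
    have := hall (widen_ord nk y); rewrite /= ltn_ord /=.
    by rewrite unfold_in /=; case: eqP => // _; apply.
  have := subset_leq_card hsub.
  rewrite card_imset ?cardsT ?card_ord; last by move=> a b /(congr1 val) /= /val_inj.
  move=> h; have := leq_trans h hw; move: dn; lia.
rewrite mxE (bigD1 t) //= /pauli1 (eqP ht0) (qbit_lo _ _ _ tn hi) (qbit_hi _ _ _ tn hj) /=.
by rewrite mul0r mulr0.
Qed.

Lemma generic (R : realType) (eps : R) k n (A : 'M[R[i]]_(2 ^ k)) (w : 'cV[R[i]]_(2 ^ k)) :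
  eps < 2^-1 -> (n <= k)%N -> vnorm w = 1 ->
  (forall j, w j 0 != 0 -> (j %% 2 ^ n = (2 ^ n).-1)%N) ->
  4^-1 <= \sum_(i : 'I_(2 ^ k)) ((i %% 2 ^ n == 0)%N%:R * `|(A *m w) i 0| ^+ 2) ->
  approx_deg_ge A eps n.
Proof.
move=> he nk hw hsup hS B hB d hd.
rewrite leqNgt; apply/negP => dn.
have hb := block0 dn nk hd.
have key : forall i : 'I_(2 ^ k), (i %% 2 ^ n == 0)%N%:R * `|((A - B) *m w) i 0| ^+ 2
   = (i %% 2 ^ n == 0)%N%:R * `|(A *m w) i 0| ^+ 2 :> R[i].
  move=> i; case: eqP => hi; last by rewrite !mul0r.
  rewrite mulmxBl; congr (_ * _ ^+ 2); congr (`|_|).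
  rewrite [LHS]mxE [X in _ + X]mxE [X in _ - X]mxE big1 ?subr0 // => j _.
  have [->|/hsup hj] := eqVneq (w j 0) 0; first by rewrite mulr0.
  by rewrite (hb i j hi hj) mul0r.
have := hB w; rewrite hw mulr1 => h.
have h2 : sqrtC (4^-1) <= vnorm ((A - B) *m w).
  rewrite /vnorm ler_sqrtC; last 2 first.
  - by rewrite nnegrE invr_ge0 ler0n.
  - by rewrite nnegrE sumr_ge0 // => i _; rewrite exprn_ge0.
  apply: le_trans hS _; rewrite -(eq_bigr _ (fun i _ => key i)).
  apply: ler_sum => i _; case: (_ == _); rewrite ?mul1r ?mul0r ?exprn_ge0 //.
have := le_trans h2 h.
have -> : (4^-1 : R[i]) = (2^-1) ^+ 2 by rewrite exprVn -natrX.
rewrite sqrCK ?invr_ge0 ?ler0n //.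
have -> : (2^-1 : R[i]) = (2^-1 : R)%:C%C by rewrite fmorphV rmorph_nat.
by rewrite lecR leNgt he.
Qed.

Lemma proj_mul (R : realType) N (v w : 'cV[R[i]]_N) i :
  (proj v *m w) i 0 = v i 0 * \sum_j (Num.conj (v j 0) * w j 0).
Proof.
rewrite /proj -mulmxA mxE big_ord1 mxE; congr (_ * _).
by apply: eq_bigr => j _; rewrite !mxE.
Qed.

Lemma s_conj (R : realType) : Num.conj (((Num.sqrt (2 : R))^-1)%:C%C) = ((Num.sqrt (2 : R))^-1)%:C%C.
Proof. exact: conjc_real. Qed.

Lemma s_sq (R : realType) : ((Num.sqrt (2 : R))^-1)%:C%C * ((Num.sqrt (2 : R))^-1)%:C%C = 2^-1.
Proof.
by rewrite -rmorphM /= -expr2 exprVn sqr_sqrtr ?ler0n // fmorphV rmorph_nat.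
Qed.

Lemma reindex (C : nzRingType) N M r (f : nat -> C) : (r < N)%N ->
  \sum_(0 <= j < M * N) ((j %% N == r)%N%:R * f (j %/ N)%N) = \sum_(0 <= b < M) f b.
Proof.
move=> rN; elim: M => [|M IH]; first by rewrite mul0n !big_geq.
rewrite big_nat_recr //= -IH mulSn addnC (big_cat_nat _ (leq_addr _ _)) //=.
congr (_ + _).
rewrite -{1}(add0n (M * N)%N) big_addn addKn big_mkord.
rewrite (bigD1 (Ordinal rN)) //= big1 ?addr0 => [|j hj].
  by rewrite addnC modnMDl modn_small // eqxx mul1r divnMDl ?(leq_ltn_trans _ rN) // divn_small // addn0.
rewrite addnC modnMDl modn_small //.
by rewrite (negbTE (hj : (j : nat) != r)) mul0r.
Qed.

Lemma cat_case (R : realType) (eps : R) (he : eps < 2^-1) n :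
  approx_deg_ge (proj (cat_state R n)) eps n.
Proof.
case: n => [|n]; first by move=> B _ d _.
have hN : ((2 ^ n.+1).-1 < 2 ^ n.+1)%N by rewrite prednK ?expn_gt0.
have h0 : (0 < 2 ^ n.+1)%N by rewrite expn_gt0.
have hne : ((2 ^ n.+1).-1 == 0)%N = false.
  by have := expn_gt0 2 n; rewrite expnS; lia.
pose w : 'cV[R[i]]_(2 ^ n.+1) := \col_j ((j : nat) == (2 ^ n.+1).-1)%:R.
apply: (@generic R eps _ _ _ w he (leqnn _)).
- rewrite /vnorm (bigD1 (Ordinal hN)) //= big1 => [|j hj]; last first.
    by rewrite mxE (negbTE (hj : (j : nat) != _)) normr0 expr0n.
  by rewrite mxE eqxx normr1 expr1n addr0 sqrtC1.
- move=> j; rewrite mxE; case: (eqVneq (j : nat) _) => [-> _|_]; first by rewrite modn_small.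
  by rewrite /= eqxx.
- rewrite (bigD1 (Ordinal h0)) //= -[4^-1]addr0; apply: lerD; last first.
    by apply: sumr_ge0 => i _; rewrite mulr_ge0 ?ler0n ?exprn_ge0.
  rewrite mod0n eqxx mul1r proj_mul (bigD1 (Ordinal hN)) //= big1 => [|j hj]; last first.
    by rewrite [w j 0]mxE (negbTE (hj : (j : nat) != _)) mulr0.
  rewrite !mxE /= eqxx hne eq_sym hne addr0 add0r mulr1 mulr1 s_conj ?addr0 ?add0r s_sq.
  by rewrite ger0_norm ?invr_ge0 ?ler0n // exprVn -natrX.
Qed.

Lemma vat_ord (R : realType) M (psi : 'cV[R[i]]_M) (b : 'I_M) : vat psi b = psi b 0.
Proof. by rewrite /vat; case: insubP => [u _ /val_inj -> //|]; rewrite ltn_ord. Qed.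

Lemma neko_case (R : realType) (eps : R) (he : eps < 2^-1) n m
  (psi0 psi1 : 'cV[R[i]]_(2 ^ m)) :
  is_state psi0 -> is_state psi1 ->
  approx_deg_ge (proj (nekomata n psi0 psi1)) eps n.
Proof.
move=> hp0 hp1.
case: n => [|n]; first by move=> B _ d _.
have hN : ((2 ^ n.+1).-1 < 2 ^ n.+1)%N by rewrite prednK ?expn_gt0.
have h0 : (0 < 2 ^ n.+1)%N by rewrite expn_gt0.
have hne : ((2 ^ n.+1).-1 == 0)%N = false.
  by have := expn_gt0 2 n; rewrite expnS; lia.
have hsum : forall (psi : 'cV[R[i]]_(2 ^ m)) r, is_state psi -> (r < 2 ^ n.+1)%N ->
    \sum_(j : 'I_(2 ^ (n.+1 + m)))
       (((j %% 2 ^ n.+1)%N == r)%:R * `|vat psi (j %/ 2 ^ n.+1)%N| ^+ 2) = 1.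
  move=> psi r hpsi hr.
  rewrite -(big_mkord xpredT (fun j => (((j %% 2 ^ n.+1)%N == r)%:R * `|vat psi (j %/ 2 ^ n.+1)%N| ^+ 2))).
  rewrite (_ : (2 ^ (n.+1 + m) = 2 ^ m * 2 ^ n.+1)%N); last by rewrite expnD mulnC.
  rewrite (@reindex _ _ _ _ (fun b => `|vat psi b| ^+ 2)) // big_mkord -hpsi.
  by apply: eq_bigr => b _; rewrite vat_ord.
pose w : 'cV[R[i]]_(2 ^ (n.+1 + m)) :=
  \col_j (((j %% 2 ^ n.+1)%N == (2 ^ n.+1).-1)%:R * vat psi1 (j %/ 2 ^ n.+1)%N).
pose s : R[i] := ((Num.sqrt (2 : R))^-1)%:C%C.
have hinner : \sum_j (Num.conj (nekomata n.+1 psi0 psi1 j 0) * w j 0) = s.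
  rewrite (eq_bigr (fun j : 'I_(2 ^ (n.+1 + m)) => s * (((j %% 2 ^ n.+1)%N == (2 ^ n.+1).-1)%:R
               * `|vat psi1 (j %/ 2 ^ n.+1)%N| ^+ 2))); first by rewrite -mulr_sumr hsum ?mulr1.
  move=> j _; rewrite !mxE.
  have [hj|hj] := eqVneq (j %% 2 ^ n.+1)%N (2 ^ n.+1).-1; last by rewrite /= !mul0r !mulr0.
  rewrite hj hne /= !mul0r !mul1r add0r rmorphM /= s_conj -mulrA; congr (_ * _).
  by rewrite mulrC -normCK.
apply: (@generic R eps _ _ _ w he (leq_addr _ _)).
- rewrite /vnorm (eq_bigr (fun j : 'I_(2 ^ (n.+1 + m)) => (((j %% 2 ^ n.+1)%N == (2 ^ n.+1).-1)%:R
               * `|vat psi1 (j %/ 2 ^ n.+1)%N| ^+ 2))); first by rewrite hsum ?sqrtC1.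
  move=> j _; rewrite mxE normrM exprMn.
  by case: (_ == _); rewrite /= ?normr1 ?normr0 ?expr1n ?expr0n ?mul0r.
- move=> j; rewrite mxE; case: (eqVneq (j %% 2 ^ n.+1)%N _) => [-> //|_].
  by rewrite /= mul0r eqxx.
- rewrite (eq_bigr (fun i : 'I_(2 ^ (n.+1 + m)) => 4^-1 * (((i %% 2 ^ n.+1)%N == 0%N)%:R
               * `|vat psi0 (i %/ 2 ^ n.+1)%N| ^+ 2))); first by rewrite -mulr_sumr hsum ?mulr1.
  move=> i _.
  have [hi|hi] := eqVneq (i %% 2 ^ n.+1)%N 0%N; last by rewrite /= !mul0r mulr0.
  rewrite !mul1r proj_mul hinner mxE hi eqxx eq_sym hne /= mul0r addr0 mul1r.
  rewrite mulrAC s_sq normrM exprMn; congr (_ * _).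
  by rewrite ger0_norm ?invr_ge0 ?ler0n // exprVn -natrX.
Qed.

Theorem corollary6p2 (R : realType) (eps : R)
    (heps : eps < (4 * Num.sqrt (2 : R))^-1) :
  (forall (n m : nat) (psi0 psi1 : 'cV[R[i]]_(2 ^ m)),
      is_state psi0 -> is_state psi1 ->
      approx_deg_ge (proj (nekomata n psi0 psi1)) eps n) /\
  (forall n : nat, approx_deg_ge (proj (cat_state R n)) eps n).
Proof.
have he : eps < 2^-1.
  apply: (lt_le_trans heps); rewrite lef_pV2 ?posrE ?mulr_gt0 ?sqrtr_gt0 ?ltr0n //.
  have hs := sqrtr_ge0 (2 : R).
  have hs2 : Num.sqrt (2 : R) ^+ 2 = 2 by rewrite sqr_sqrtr ?ler0n.
  nra.
split; first by move=> n m psi0 psi1; exact: neko_case.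
by move=> n; exact: cat_case.
Qed.
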